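(* Let $n$ be a positive integer, $g=3n+2$, and let $G=\{\ell_1<\dots<\ell_g\}$ be a pseudo-symmetric pure $(2n+1)$-sparse gapset of genus $g$ with multiplicity $m$. Then $G$ has depth $3$, its canonical partition is $G=G_0\cup G_1\cup G_2$ with $G_2=\{\ell_g\}$ and $\#G_1=n+1$, and moreover $\ell_{g-1}=2m-1$, $\ell_g=3m-1$, and $\alpha=g-1$, where $\alpha=\max\{i:\ell_{i+1}-\ell_i=2n+1\}$.
   Context: A gapset is a finite set $G\subset\mathbb{N}=\{1,2,\dots\}$ such that whenever $z\in G$ and $z=x+y$ with $x,y\in\mathbb{N}$, then $x\in G$ or $y\in G$; its genus is $g=\#G$. Multiplicity $m(G)=\min\{s\in\mathbb{N}:s\notin G\}$; conductor $c(G)=\min\{s\in\mathbb{N}: s+t\notin G\ \forall t\in\mathbb{N}_0\}$; Frobenius number $F(G)=c(G)-1=\ell_g$; depth $q=\lceil c(G)/m(G)\rceil$. The canonical partition is $G=G_0\cup\dots\cup G_{q-1}$ with $G_i=G\cap[im+1,(i+1)m-1]$ (so $G_0=[1,m-1]$). $G$ is pseudo-symmetric if $F(G)=2g-2$. $G$ is pure $\kappa$-sparse if $\ell_{i+1}-\ell_i\le\kappa$ for all $i$ with equality for some $i$. *)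

(* Defs.v *)
From mathcomp Require Import all_boot.
Set Implicit Arguments. Unset Strict Implicit. Unset Printing Implicit Defensive.

Definition is_gapset (G : seq nat) : bool :=
  [&& uniq G, all (fun z => 0 < z) G &
      all (fun z => all (fun x => (x \in G) || ((z - x) \in G)) (iota 1 z.-1)) G].
  (* z = x + y with x,y >= 1  <->  x in [1, z-1], y = z - x *)

Definition genus (G : seq nat) : nat := size G.

(* ell G i = l_i, the i-th smallest element (1-indexed). *)
Definition ell (G : seq nat) (i : nat) : nat := nth 0 (sort leq G) i.-1.

Definition is_multiplicity (G : seq nat) (m : nat) : Prop :=
  [/\ 0 < m, m \notin G & forall s, 0 < s < m -> s \in G].

(* conductor: min { s >= 1 | s + t \notin G for all t >= 0 } = (max G) + 1
   (equal to 1 when G is empty). *)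
Definition conductor (G : seq nat) : nat := (\max_(x <- G) x).+1.
Definition frobenius (G : seq nat) : nat := (conductor G).-1.

(* depth q = ceil (c / m) *)
Definition depth (G : seq nat) (m : nat) : nat := (conductor G + m - 1) %/ m.

Definition cpart (G : seq nat) (m i : nat) : seq nat :=
  [seq x <- G | (i * m + 1 <= x) && (x <= i.+1 * m - 1)].

Definition pseudo_symmetric (G : seq nat) : Prop :=
  frobenius G = 2 * genus G - 2.

Definition pure_sparse (kappa : nat) (G : seq nat) : Prop :=
  (forall i, 1 <= i < genus G -> ell G i.+1 - ell G i <= kappa) /\
  (exists2 i, 1 <= i < genus G & ell G i.+1 - ell G i = kappa).

Definition alpha (kappa : nat) (G : seq nat) : nat :=
  \max_(1 <= i < genus G | ell G i.+1 - ell G i == kappa) i.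

(* Main.v *)
Require Import Defs.
From mathcomp Require Import all_boot.
From mathcomp Require Import zify.

Section Aux.
Variable G : seq nat.

Lemma gclos_of : is_gapset G -> forall z x, z \in G -> 0 < x < z -> (x \in G) || ((z - x) \in G).
Proof.
case/and3P=> _ _ /allP H z x Hz Hx.
have := allP (H z Hz) x; rewrite mem_iota; apply; lia.
Qed.

Lemma max_in : G != [::] -> \max_(x <- G) x \in G.
Proof.
elim: G => [|a s IH] //= _; rewrite big_cons.
case: s IH => [|b s] IH; first by rewrite big_nil maxn0 inE.
have := IH isT; set M := \max_(x <- _) x => HM.
case: (leqP a M) => h.
- by rewrite inE HM orbT.
- by rewrite inE eqxx.
Qed.

Lemma mult_notin m : 0 < m -> m \notin G -> is_gapset G -> forall k, 0 < k -> k * m \notin G.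
Proof.
move=> m0 mG gs; elim=> [|k IH] // _.
case: k IH => [|k] IH; first by rewrite mul1n.
apply/negP=> H; have := gclos_of gs _ m H.
have -> : k.+2 * m - m = k.+1 * m by rewrite mulSn addKn.
have Hlt : 0 < m < k.+2 * m by apply/andP; split => //; nia.
by rewrite (negbTE mG) (negbTE (IH isT)) /=; move/(_ Hlt).
Qed.

End Aux.

Lemma sorted_nth_lt (s : seq nat) i j : sorted ltn s -> i < j < size s -> nth 0 s i < nth 0 s j.
Proof.
move=> ss /andP [ij js]; apply: (sorted_ltn_nth ltn_trans 0 ss) => //; rewrite inE //; lia.
Qed.

Lemma sorted_nth_le (s : seq nat) i j : sorted ltn s -> i <= j < size s -> nth 0 s i <= nth 0 s j.
Proof.
move=> ss /andP [ij js]; rewrite leq_eqVlt in ij; case/orP: ij => [/eqP->//|ij].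
by apply: ltnW; apply: sorted_nth_lt => //; rewrite ij js.
Qed.

Lemma sorted_between (s : seq nat) j y : sorted ltn s -> j.+1 < size s -> y \in s ->
  nth 0 s j < y < nth 0 s j.+1 -> False.
Proof.
move=> ss js ys /andP [h1 h2].
have ks : index y s < size s by rewrite index_mem.
have ey := nth_index 0 ys.
case: (leqP (index y s) j) => hk.
- have := @sorted_nth_le s (index y s) j ss; rewrite ey hk /=; move=> H.
  have := H ltac:(lia); lia.
- have := @sorted_nth_le s j.+1 (index y s) ss; rewrite ey hk ks /=; move=> H.
  have := H isT; lia.
Qed.

Lemma uniq_single (s : seq nat) F : uniq s -> (forall y, (y \in s) = (y == F)) -> s = [:: F].
Proof.
case: s => [|y [|z s]] /= U H.
- by have := H F; rewrite eqxx in_nil.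
- by have := H y; rewrite inE eqxx => /esym/eqP->.
- have := H y; have := H z; rewrite !inE !eqxx orbT /= => /esym/eqP e1 /esym/eqP e2.
  by move: U; rewrite e1 e2 inE eqxx.
Qed.

Lemma excl (G : seq nat) n : is_gapset G -> size G = 3 * n + 2 ->
  (forall x, x \in G -> x <= 6 * n + 2) -> 6 * n + 2 \in G ->
  forall x, 1 <= x <= 3 * n -> x \in G -> (6 * n + 2 - x) \in G -> False.
Proof.
move=> gs sG leF FG x hx xG yG0.
have gs' := gs; case/and3P: gs' => uG /allP posG _.
set F := 6 * n + 2 in leF FG yG0.
have HS : size G = count (mem G) (iota 1 F).
  rewrite -size_filter; apply: perm_size; apply: uniq_perm => //.
    by rewrite filter_uniq // iota_uniq.
  move=> y; rewrite mem_filter mem_iota; case: (boolP (y \in G)) => yG' //=.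
  have h1 := posG y yG'; have h2 := leF y yG'; by rewrite yG' /=; apply/esym/andP; split; lia.
  by rewrite (negbTE yG').
have eI : iota 1 F = iota 1 (3 * n) ++ [:: 3 * n + 1] ++ iota (3 * n + 2) (3 * n) ++ [:: F].
  rewrite /F.
  have -> : 6 * n + 2 = 3 * n + (1 + (3 * n + 1)) by lia.
  rewrite (iotaD 1 (3 * n)) (iotaD _ 1) (iotaD _ (3 * n) 1) /=.
  set k := 3 * n. have -> : 1 + k + 1 = k + 2 by lia. have -> : k + 2 + k = k + (1 + (k + 1)) by lia. by rewrite (addnC 1 k).
have mid : count (mem G) (iota (3 * n + 2) (3 * n)) =
           count (fun y => (F - y) \in G) (iota 1 (3 * n)).
  have P : perm_eq [seq F - y | y <- iota 1 (3 * n)] (iota (3 * n + 2) (3 * n)).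
    apply: uniq_perm; last 1 first.
    - move=> w; rewrite mem_iota; apply/mapP/idP.
      + by case=> z; rewrite mem_iota /F => hz ->; lia.
      + move=> hy; exists (F - w); rewrite ?mem_iota /F; lia.
    - rewrite map_inj_in_uniq ?iota_uniq // => a b; rewrite !mem_iota /F; lia.
    - exact: iota_uniq.
  by rewrite -(permP P) count_map.
have h31 : 3 * n + 1 \in G.
  have := gclos_of G gs _ (3 * n + 1) FG; rewrite /F.
  have -> : 6 * n + 2 - (3 * n + 1) = 3 * n + 1 by lia.
  rewrite orbb; apply; lia.
move: HS; rewrite eI !count_cat mid /= h31 FG sG.
set A := count _ _; set B := count _ _ => HS.
have U := count_predUI (mem G) (fun y => (F - y) \in G) (iota 1 (3 * n)).
have C : count (predU (mem G) (fun y => (F - y) \in G)) (iota 1 (3 * n)) = 3 * n.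
  rewrite -[RHS](size_iota 1) -count_predT; apply: eq_in_count => y; rewrite mem_iota => hy.
  rewrite /= ; apply: (gclos_of G gs _ y FG); rewrite /F; lia.
have : 0 < count (predI (mem G) (fun y => (F - y) \in G)) (iota 1 (3 * n)).
  rewrite -has_count; apply/hasP; exists x; first by rewrite mem_iota; lia.
  by rewrite /= xG yG0.
rewrite /A /B /= in HS; move=> H0; move: U; rewrite C => U. set c2 := count (fun y => F - y \in G) (iota 1 (3 * n)) in U HS. set c1 := count (mem G) (iota 1 (3 * n)) in U HS. set c3 := count (predI _ _) _ in U H0. lia.
Qed.


Ltac slia := repeat match goal with H : ?T |- _ =>
  match T with
  | is_true (_ <= _) => fail 1
  | is_true (_ && _) => fail 1
  | is_true (~~ (_ == _)) => fail 1
  | is_true (_ == _) => fail 1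
  | @eq nat _ _ => fail 1
  | ~ (_ = _) => fail 1
  | nat => fail 1
  | _ => clear H
  end end; lia.

Theorem mainTheorem13 (n : nat) (G : seq nat) (m : nat) :
  0 < n ->
  is_gapset G ->
  genus G = 3 * n + 2 ->
  pseudo_symmetric G ->
  pure_sparse (2 * n + 1) G ->
  is_multiplicity G m ->
  depth G m = 3 /\
  (forall x, (x \in G) =
     [|| x \in cpart G m 0, x \in cpart G m 1 | x \in cpart G m 2]) /\
  cpart G m 2 = [:: ell G (genus G)] /\
  size (cpart G m 1) = n + 1 /\
  ell G (genus G).-1 = 2 * m - 1 /\
  ell G (genus G) = 3 * m - 1 /\
  alpha (2 * n + 1) G = genus G - 1.
Proof.
move=> n0 gs gG ps [spb [i0 hi0 ei0]] [m0 mG mlt].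
have gs' := gs; case/and3P: gs' => uG /allP posG _.
have hF : \max_(x <- G) x = 6 * n + 2.
  by move: ps; rewrite /pseudo_symmetric /frobenius /conductor /= gG; slia.
have FG : 6 * n + 2 \in G.
  rewrite -hF; apply: max_in; apply/eqP => e; move: gG; rewrite /genus e /=; slia.
have leF : forall x, x \in G -> x <= 6 * n + 2.
  by move=> x xG; rewrite -hF; exact: (leq_bigmax_seq x xG).
have exclF := excl G n gs gG leF FG.
set F := 6 * n + 2 in hF FG leF exclF.
set s := sort leq G.
have ss : sorted ltn s by rewrite ltn_sorted_uniq_leq sort_uniq uG sort_sorted //; exact: leq_total.
have sz : size s = 3 * n + 2 by rewrite size_sort.
have ms : forall y, (y \in s) = (y \in G) by move=> y; rewrite mem_sort.
have inS : forall k, k < 3 * n + 2 -> nth 0 s k \in G.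
  by move=> k hk; rewrite -ms mem_nth // sz.
have ellE : forall k, ell G k = nth 0 s k.-1 by [].
have mle : m <= 3 * n + 3.
  have := @uniq_leq_size _ (iota 1 m.-1) G (iota_uniq _ _).
  rewrite size_iota => H.
  have : m.-1 <= size G by apply: H => y; rewrite mem_iota => hy; apply: mlt; slia.
  rewrite /genus in gG; slia.
have FmG : F - m \in G.
  have := gclos_of G gs _ m FG; rewrite (negbTE mG) /=; apply; rewrite /F; slia.
set b := nth 0 s (3 * n + 1).
set a := nth 0 s (3 * n).
have bG : b \in G by apply: inS; slia.
have aG : a \in G by apply: inS; slia.
have leb : forall y, y \in G -> y <= b.
  move=> y yG; rewrite -ms in yG.
  rewrite -(nth_index 0 yG); apply: sorted_nth_le => //.
  rewrite sz; have := index_mem y s; rewrite yG sz; slia.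
have bF : b = F by have := leb F FG; have := leF b bG; slia.
have ab : a < b by apply: sorted_nth_lt => //; rewrite sz; slia.
have lea : forall y, y \in G -> y != F -> y <= a.
  move=> y yG yF; have yG' := yG; rewrite -ms in yG'.
  rewrite -(nth_index 0 yG'); apply: sorted_nth_le => //.
  have hi : index y s < 3 * n + 2 by rewrite -sz index_mem.
  have : index y s != 3 * n + 1.
    apply/eqP => e; move: yF; rewrite -(nth_index 0 yG') e -/b bF eqxx //.
  move=> ne; apply/andP; split; [|slia]. slia.
have Fa : F - a <= 2 * n + 1.
  have := spb (3 * n + 1); rewrite gG !ellE /= -/a -/b bF.
  have -> : (3 * n + 1).-1 = 3 * n by slia.
  rewrite -/a; apply; slia.
have aFm : F - m <= a by apply: lea => //; rewrite /F; apply/eqP; slia.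
have aFm' : a <= F - m.
  case: (leqP a (F - m)) => // h; exfalso.
  apply: (exclF (F - a)); first (rewrite /F in Fa h ab bF *; slia).
    by apply: mlt; rewrite /F in h ab bF *; slia.
  have -> : F - (F - a) = a by rewrite /F in ab bF *; slia.
  exact: aG.
have aE : a = F - m by slia.
have mle2 : m <= 2 * n + 1 by rewrite /F in Fa aE *; slia.
have mge : 2 * n + 1 <= m.
  case: (leqP (2 * n + 1) m) => // hm; exfalso.
  move: hi0 ei0; rewrite gG !ellE /= => hi0 ei0.
  set a0 := nth 0 s i0.-1 in ei0; set b0 := nth 0 s i0 in ei0.
  have b0G : b0 \in G by apply: inS; slia.
  have eb0 : b0 = a0 + (2 * n + 1) by slia.
  have b0F := leF b0 b0G.
  have notin : forall y, a0 < y < b0 -> y \notin G.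
    move=> y hy; apply/negP => yG; rewrite -ms in yG.
    apply: (@sorted_between s i0.-1 y ss _ yG); first by rewrite sz; slia.
    by have -> : i0.-1.+1 = i0 by slia.
  have [c ec] : {c | c = F - b0 + 1} by exists (F - b0 + 1).
  have hd := divn_eq (c - 1) m; have hr := ltn_pmod (c - 1) m0.
  move: ((c - 1) %/ m) ((c - 1) %% m) hd hr => q r hd hr.
  have [t et] : {t | t = q.+1 * m} by exists (q.+1 * m).
  have ht : c <= t <= c - 1 + m.
    rewrite et mulSn; move: (q * m) hd => qm hd; apply/andP; split; slia.
  have tG : t \in G.
    have y0 : a0 < F - t < b0 by apply/andP; split; slia.
    have := gclos_of G gs _ (F - t) FG; rewrite (negbTE (notin _ y0)) /=.
    have -> : F - (F - t) = t by slia.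
    apply; apply/andP; split; slia.
  by move: tG; rewrite et; apply/negP; apply: mult_notin => //.
have mE : m = 2 * n + 1 by slia.
have m2 : 2 * m \notin G by apply: mult_notin.
have ellg : ell G (genus G) = F.
  rewrite ellE gG; have -> : (3 * n + 2).-1 = 3 * n + 1 by slia.
  by rewrite -/b bF.
have ellg1 : ell G (genus G).-1 = 4 * n + 1.
  rewrite ellE gG.
  have -> : (3 * n + 2).-1.-1 = 3 * n by slia.
  by rewrite -/a aE /F mE; slia.
have hmult : forall x, x \in G -> [/\ 0 < x, x <= F, x != m & x != 2 * m].
  move=> x xG; split; [exact: posG | exact: leF | |].
  - by apply: contraNneq mG => <-.
  - by apply: contraNneq m2 => <-.
have part : forall x, (x \in G) =
     [|| x \in cpart G m 0, x \in cpart G m 1 | x \in cpart G m 2].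
  move=> x; rewrite /cpart !mem_filter; case: (boolP (x \in G)) => xG; rewrite ?andbT ?andbF //.
  have [h1 h2 h3 h4] := hmult x xG; rewrite mE /F in h2 h3 h4 *.
  move/eqP: h3; move/eqP: h4 => h4 h3.
  case: (leqP x (2 * n)) => c1.
    by apply/esym/orP; left; apply/andP; split; slia.
  case: (leqP x (4 * n + 1)) => c2.
    by apply/esym/orP; right; apply/orP; left; apply/andP; split; slia.
  by apply/esym/orP; right; apply/orP; right; apply/andP; split; slia.
have c2 : cpart G m 2 = [:: ell G (genus G)].
  rewrite ellg; apply: uniq_single; first exact: filter_uniq.
  move=> y; rewrite mem_filter; case: (boolP (y \in G)) => yG; rewrite ?andbT ?andbF.
  - case: (eqVneq y F) => [->|ne].
      by apply/andP; rewrite mE /F; split; slia.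
    have := lea y yG ne; rewrite aE mE /F => h.
    by apply/negbTE/negP => /andP [h1 h2]; slia.
  - by apply/esym/negbTE; apply: contraNneq yG => ->.
split.
  rewrite /depth /conductor hF mE /F.
  have -> : (6 * n + 2).+1 + (2 * n + 1) - 1 = 3 * (2 * n + 1) + 2 * n by slia.
  rewrite divnMDl; last by slia.
  by rewrite (@divn_small (2 * n) (2 * n + 1)) ?addn0 //; slia.
split; first exact: part.
split; first exact: c2.
split.
  pose P (i : nat) := fun x => (i * m + 1 <= x) && (x <= i.+1 * m - 1).
  have e i : size (cpart G m i) = count (P i) G by rewrite /cpart size_filter.
  have s2 : count (P 2) G = 1 by rewrite -e c2.
  have s0 : count (P 0) G = m.-1.
    rewrite -size_filter; apply: etrans (size_iota 1 m.-1); apply: perm_size.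
    apply: uniq_perm; [exact: filter_uniq | exact: iota_uniq |].
    move=> y; rewrite mem_filter mem_iota /P; case: (boolP (y \in G)) => yG; rewrite ?andbT ?andbF.
    + have [h1 _ h3 _] := hmult y yG; move/eqP: h3 => h3.
      case: (leqP y m) => hy.
      * have e1 : (0 * m + 1 <= y) && (y <= 1 * m - 1) by apply/andP; split; slia.
        have e2 : (1 <= y) && (y < 1 + m.-1) by apply/andP; split; slia.
        by rewrite e1 e2.
      * have e1 : ~~ ((0 * m + 1 <= y) && (y <= 1 * m - 1)) by apply/negP => /andP [? ?]; slia.
        have e2 : ~~ ((1 <= y) && (y < 1 + m.-1)) by apply/negP => /andP [? ?]; slia.
        by rewrite (negbTE e1) (negbTE e2).
    + apply/esym/negbTE/negP => hy; move: yG; rewrite mlt //; slia.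
  have tot : count (predU (P 0) (predU (P 1) (P 2))) G = 3 * n + 2.
    rewrite -gG /genus -count_predT; apply: eq_in_count => y yG.
    by have := part y; rewrite /cpart !mem_filter yG !andbT => h; apply/esym; exact: h.
  have U1 := count_predUI (P 1) (P 2) G.
  have U0 := count_predUI (P 0) (predU (P 1) (P 2)) G.
  have z1 : count (predI (P 1) (P 2)) G = 0.
    apply/eqP; rewrite -leqn0 -(count_pred0 G) (eq_count (a2 := pred0)) // => y.
    rewrite /= /P; apply/negbTE/negP => /andP [/andP [? ?] /andP [? ?]]; slia.
  have z0 : count (predI (P 0) (predU (P 1) (P 2))) G = 0.
    apply/eqP; rewrite -leqn0 -(count_pred0 G) (eq_count (a2 := pred0)) // => y.
    rewrite /= /P; apply/negbTE/negP => /andP [/andP [? ?] /orP [/andP [? ?]|/andP [? ?]]]; slia.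
  rewrite e; move: U1 U0; rewrite tot z1 z0 s0 s2 mE; slia.
split; first by rewrite ellg1 mE; slia.
split; first by rewrite ellg mE /F; slia.
rewrite /alpha gG; apply/eqP; rewrite eqn_leq; apply/andP; split.
  by apply/bigmax_leqP_seq => i; rewrite mem_index_iota => hi _; slia.
have gm1 : 3 * n + 2 - 1 = 3 * n + 1 by slia.
rewrite gm1; apply: (leq_bigmax_seq (3 * n + 1)); first by rewrite mem_index_iota; slia.
rewrite !ellE /=.
have -> : (3 * n + 1).-1 = 3 * n by slia.
by rewrite -/a -/b bF aE mE /F; apply/eqP; slia.
Qed.
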